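(* For every $y\in(0,1)$, $$\frac{\pi}{2}\,y\cot\left(\frac{\pi y}{2}\right)\log y\le\log\left(\sin\left(\frac{\pi y}{2}\right)\right),\qquad y\coth(y)\log y\le\log(\sinh(y)),$$ $$\log\left(\tan\left(\frac{\pi y}{2}\right)\right)\ge\frac{\pi}{2}\,y\log(y)\csc\left(\frac{\pi y}{2}\right)\sec\left(\frac{\pi y}{2}\right).$$ *)

(* Defs.v *)
From Stdlib Require Import Reals.
Open Scope R_scope.
Definition cot (x : R) : R := cos x / sin x.
Definition coth (x : R) : R := cosh x / sinh x.
Definition csc (x : R) : R := / sin x.
Definition sec (x : R) : R := / cos x.

(* Main.v *)
Require Import Defs.
From Stdlib Require Import Reals Lra.
From Coquelicot Require Import Coquelicot.
Open Scope R_scope.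
Lemma sinpos c : 0 < c <= 1 -> 0 < sin (PI*c/2).
Proof. intros. apply sin_gt_0. pose proof PI_RGT_0. nra. pose proof PI_RGT_0. nra. Qed.
Lemma d1 c : 0 < c <= 1 -> is_derive (fun y => ln (sin (PI*y/2)) - (PI/2)*y*(cos(PI*y/2)/sin(PI*y/2))*ln y) c
  ((PI/2)*ln c*(PI*c/2 - sin(PI*c/2)*cos(PI*c/2))/ (sin(PI*c/2))^2).
Proof.
intros Hc. pose proof (sinpos c Hc).
auto_derive.
- repeat split; lra.
- change (PI*c*/2) with (PI*c/2).
  pose proof (sin2_cos2 (PI*c/2)). unfold Rsqr in *.
  set (s := sin (PI*c/2)) in *. set (co := cos (PI*c/2)) in *.
  assert (co*co = 1 - s*s) by lra.
  field_simplify; try lra.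
  replace (co^2) with (co*co) by ring. rewrite H1. field. lra.
Qed.
Lemma lnneg c : 0 < c < 1 -> ln c < 0.
Proof. intros. rewrite <- ln_1. apply ln_increasing; lra. Qed.

Lemma part1 y : 0 < y < 1 ->
  (PI/2)*y*(cos(PI*y/2)/sin(PI*y/2))*ln y <= ln (sin (PI*y/2)).
Proof.
intros Hy.
destruct (MVT_cor2 (fun y => ln (sin (PI*y/2)) - (PI/2)*y*(cos(PI*y/2)/sin(PI*y/2))*ln y)
  (fun c => (PI/2)*ln c*(PI*c/2 - sin(PI*c/2)*cos(PI*c/2))/ (sin(PI*c/2))^2) y 1) as [c [Hc1 Hc2]].
- lra.
- intros c Hc. apply is_derive_Reals. apply d1. lra.
- cbv beta in Hc1. replace (PI*1/2) with (PI/2) in Hc1 by field.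
  rewrite sin_PI2, ln_1 in Hc1.
  assert (Hs := sinpos c ltac:(lra)).
  assert (Hl := lnneg c ltac:(lra)).
  assert (Hx : sin (PI*c/2) * cos(PI*c/2) < PI*c/2).
  { assert (H2 := sin_lt_x (2*(PI*c/2)) ltac:(pose proof PI_RGT_0; nra)).
    rewrite sin_2a in H2. lra. }
  assert (Hneg : (PI/2)*ln c*(PI*c/2 - sin(PI*c/2)*cos(PI*c/2))/ (sin(PI*c/2))^2 < 0).
  { assert (0 < / (sin (PI*c/2))^2) by (apply Rinv_0_lt_compat; nra).
    unfold Rdiv. pose proof PI_RGT_0.
    assert ((PI/2)*ln c < 0) by nra. 
    assert ((PI/2)*ln c*(PI*c/2 - sin(PI*c/2)*cos(PI*c/2)) < 0) by nra. nra. }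
  revert Hneg Hc1. generalize ((PI/2)*ln c*(PI*c/2 - sin(PI*c/2)*cos(PI*c/2))/ (sin(PI*c/2))^2).
  intros d Hd Hc1. ring_simplify in Hc1. nra.
Qed.

Lemma cosh_gt1 y : 0 < y -> 1 < cosh y.
Proof.
intros Hy.
destruct (MVT_cor2 cosh sinh 0 y Hy) as [c [H1 H2]].
- intros. apply derivable_pt_lim_cosh.
- rewrite cosh_0 in H1. assert (0 < sinh c) by (rewrite <- sinh_0; apply sinh_lt; lra). nra.
Qed.

Lemma sinh_gt y : 0 < y -> y < sinh y.
Proof.
intros Hy.
destruct (MVT_cor2 (fun x => sinh x - x) (fun x => cosh x - 1) 0 y Hy) as [c [H1 H2]].
- intros. apply (derivable_pt_lim_minus sinh id). apply derivable_pt_lim_sinh. apply derivable_pt_lim_id.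
- cbv beta in H1. rewrite sinh_0 in H1. assert (1 < cosh c) by (apply cosh_gt1; lra). nra.
Qed.

Lemma H_gt y : 0 < y -> sinh y < y * cosh y.
Proof.
intros Hy.
destruct (MVT_cor2 (fun x => x * cosh x - sinh x) (fun x => (1 * cosh x + x * sinh x) - cosh x) 0 y Hy) as [c [H1 H2]].
- intros. apply (derivable_pt_lim_minus (fun x => x * cosh x) sinh).
  apply (derivable_pt_lim_mult id cosh). apply derivable_pt_lim_id. apply derivable_pt_lim_cosh.
  apply derivable_pt_lim_sinh.
- cbv beta in H1. rewrite sinh_0, cosh_0 in H1. assert (0 < sinh c) by (rewrite <- sinh_0; apply sinh_lt; lra).
  assert (0 < c * sinh c) by nra. nra.
Qed.

Theorem lemma4p4 : forall y : R, 0 < y < 1 ->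
  (PI / 2) * y * cot (PI * y / 2) * ln y <= ln (sin (PI * y / 2)) /\
  y * coth y * ln y <= ln (sinh y) /\
  ln (tan (PI * y / 2)) >= (PI / 2) * y * ln y * csc (PI * y / 2) * sec (PI * y / 2).
Proof.
intros y Hy.
assert (P1 := part1 y Hy).
assert (Hl := lnneg y Hy).
split; [exact P1|split].
- unfold coth.
  assert (Hs := sinh_gt y ltac:(lra)). assert (Hh := H_gt y ltac:(lra)).
  assert (ln y < ln (sinh y)) by (apply ln_increasing; lra).
  assert (1 <= y * (cosh y / sinh y)).
  { unfold Rdiv. apply (Rmult_le_reg_r (sinh y)). lra.
    rewrite Rmult_assoc, Rmult_assoc, Rinv_l by lra. lra. }
  nra.
- unfold tan, csc, sec, cot in *.
  assert (Hs := sinpos y ltac:(lra)).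
  set (x := PI*y/2) in *.
  assert (Hc : 0 < cos x).
  { apply cos_gt_0; unfold x; pose proof PI_RGT_0; nra. }
  pose proof (sin2_cos2 x). unfold Rsqr in *.
  assert (Hc1 : cos x < 1) by nra.
  assert (ln (cos x) < 0) by (apply lnneg; lra).
  rewrite ln_div by lra.
  set (K := PI/2*y*ln y).
  assert (HK : K < 0) by (unfold K; pose proof PI_RGT_0; assert (0 < PI/2*y) by nra; nra).
  assert (E : K * / sin x * / cos x = K * (cos x / sin x) + K * (sin x / cos x)).
  { replace (K * (cos x / sin x) + K * (sin x / cos x)) with
       (K * (cos x * cos x + sin x * sin x) / (sin x * cos x)) by (field; lra).
    rewrite (Rplus_comm (cos x * cos x)), H. field. lra. }
  rewrite E.
  assert (K * (sin x / cos x) < 0).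
  { assert (0 < sin x / cos x) by (apply Rdiv_lt_0_compat; lra). nra. }
  replace (K * (cos x / sin x)) with (PI/2*y*(cos x / sin x)*ln y) by (unfold K; ring).
  lra.
Qed.
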